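(* Let $\psi$ be a reduced function with $\delta(\psi)<2$, let $(n_i)_{i\ge1}$ be its associated sequence, and let $(n'_i)_{i\ge1}$ be another increasing sequence of non-negative integers such that $n'_{i+1}=2n'_i-n'_{\psi(i)}$ for all sufficiently large $i$. Then $n'_i/n_i$ has a finite positive limit as $i\to\infty$, and $\delta(\psi)=\limsup_{i\to\infty} n'_{i+1}/n'_i$.
   Context: $\mathcal{A}$ is an alphabet disjoint from $\mathbb{N}^*=\{1,2,\dots\}$. A function here is a map $\psi:\mathbb{N}^*\to\mathbb{N}^*\sqcup\mathcal{A}$ such that for every $n\ge1$ either $\psi(n)\in\mathcal{A}$ or $1\le\psi(n)\le n-1$. Let $(t_k)_{k\ge0}$ be the (finite or infinite) family, in increasing order, of all $n\ge1$ with $\psi(n)\in\mathcal{A}$ or $1\le\psi(n)\le n-2$. $\psi$ is reduced if for every $k\ge1$ such that $t_k$ exists: $\psi(t_k)\ne\psi(t_{k-1})$, and either $\psi(t_k)\in\mathcal{A}$ or $\psi(t_k)<t_{k-1}$. The sequence associated with a reduced $\psi$ is defined by $n_1=0$ and, for $i\ge1$, $n_{i+1}=2n_i-n_{\psi(i)}$ if $\psi(i)\in\mathbb{N}^*$, $n_{i+1}=2n_i+1$ if $\psi(i)\in\mathcal{A}$; and $\delta(\psi)=\limsup_{i\to\infty} n_{i+1}/n_i$. *)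

(* Defs.v *)
From HB Require Import structures.
From mathcomp Require Import all_boot all_order all_algebra.
From mathcomp Require Import all_classical all_reals all_analysis.
Set Implicit Arguments. Unset Strict Implicit. Unset Printing Implicit Defensive.
Import Order.TTheory GRing.Theory Num.Theory.

(* Functions psi : N* -> N* ⊔ A are modelled as psi : nat -> nat + A,
   with (inl k) meaning psi(n) = k ∈ N* and (inr a) meaning psi(n) = a ∈ A.
   The value at 0 is irrelevant (domain is N* = {1,2,...}). *)

Definition is_function (A : Type) (psi : nat -> nat + A) : Prop :=
  forall n, (1 <= n)%N ->
    (exists a, psi n = inr a) \/ (exists k, psi n = inl k /\ (1 <= k)%N /\ (k <= n - 1)%N).

Definition in_t (A : Type) (psi : nat -> nat + A) (n : nat) : Prop :=
  (1 <= n)%N /\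
  ((exists a, psi n = inr a) \/ (exists k, psi n = inl k /\ (1 <= k)%N /\ (k <= n - 2)%N)).

(* t_{k-1} = m and t_k = n are consecutive terms of the increasing family (t_k) *)
Definition consecutive_t (A : Type) (psi : nat -> nat + A) (m n : nat) : Prop :=
  in_t psi m /\ in_t psi n /\ (m < n)%N /\
  (forall j, (m < j)%N -> (j < n)%N -> ~ in_t psi j).

Definition reduced (A : Type) (psi : nat -> nat + A) : Prop :=
  is_function psi /\
  forall m n, consecutive_t psi m n ->
    psi n <> psi m /\
    ((exists a, psi n = inr a) \/ (exists k, psi n = inl k /\ (k < m)%N)).

(* Associated sequence: assoc_list psi m = [:: n_1; ...; n_{m+1}] *)
Definition next_val (A : Type) (psi : nat -> nat + A) (l : seq int) : int :=
  let i := size l in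
  let ni := nth 0%R l i.-1 in
  match psi i with
  | inl k => (2 * ni - nth 0%R l k.-1)%R
  | inr _ => (2 * ni + 1)%R
  end.

Fixpoint assoc_list (A : Type) (psi : nat -> nat + A) (m : nat) : seq int :=
  match m with
  | 0 => [:: 0%R]
  | m'.+1 => rcons (assoc_list psi m') (next_val psi (assoc_list psi m'))
  end.

(* n_i for i >= 1 (value at i = 0 is an irrelevant junk value) *)
Definition assoc_seq (A : Type) (psi : nat -> nat + A) (i : nat) : int :=
  nth 0%R (assoc_list psi i.-1) i.-1.

Local Open Scope ring_scope.

Definition limsup_ratio (R : realType) (u : nat -> int) : \bar R :=
  limn_esup (fun i => ((u i.+1)%:~R / (u i)%:~R : R)%:E).

Definition delta (R : realType) (A : Type) (psi : nat -> nat + A) : \bar R :=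
  limsup_ratio R (assoc_seq psi).

(* Main.v *)
Require Import Defs.
From HB Require Import structures.
From mathcomp Require Import all_boot all_order all_algebra.
From mathcomp Require Import all_classical all_reals all_analysis.
From mathcomp Require Import zify ring lra.
Import Order.TTheory GRing.Theory Num.Theory numFieldNormedType.Exports.
Local Open Scope classical_set_scope.
Local Open Scope ring_scope.

Section Assoc.
Variables (A : Type) (psi : nat -> nat + A).

Lemma size_assoc m : size (assoc_list psi m) = m.+1.
Proof. by elim: m => //= m IH; rewrite size_rcons IH. Qed.

Lemma assoc_stable m j : (j <= m)%N ->
  nth 0 (assoc_list psi m) j = assoc_seq psi j.+1.
Proof.
elim: m => [|m IH]; first by rewrite leqn0 => /eqP ->.
rewrite leq_eqVlt => /orP[/eqP ->|jm]; first by [].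
by rewrite /= nth_rcons size_assoc jm IH.
Qed.

Lemma n_rec_l i k : (1 <= i)%N -> psi i = inl k -> (1 <= k <= i)%N ->
  assoc_seq psi i.+1 = 2 * assoc_seq psi i - assoc_seq psi k.
Proof.
case: i => // i _ pk /andP[k1 ki].
rewrite /assoc_seq -/(assoc_seq psi i.+1) -/(assoc_seq psi k).
change (assoc_list psi i.+2.-1) with (rcons (assoc_list psi i) (next_val psi (assoc_list psi i))).
rewrite nth_rcons size_assoc ltnn eqxx.
rewrite /next_val size_assoc pk.
rewrite (@assoc_stable i i (leqnn i)); congr (_ - _).
case: k k1 ki {pk} => // k _ ki.
by rewrite (@assoc_stable i k ki).
Qed.

Lemma n_rec_r i a : (1 <= i)%N -> psi i = inr a ->
  assoc_seq psi i.+1 = 2 * assoc_seq psi i + 1.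
Proof.
case: i => // i _ pk.
rewrite /assoc_seq -/(assoc_seq psi i.+1).
change (assoc_list psi i.+2.-1) with (rcons (assoc_list psi i) (next_val psi (assoc_list psi i))).
rewrite nth_rcons size_assoc ltnn eqxx.
by rewrite /next_val size_assoc pk (@assoc_stable i i (leqnn i)).
Qed.

Lemma n_1 : assoc_seq psi 1 = 0.
Proof. by []. Qed.
End Assoc.

Section Core.
Variables (R : realType) (N M : nat -> R) (p : nat -> nat) (T0 : nat).
Hypothesis hT0 : (2 <= T0)%N.
Hypothesis hN1 : N 1 = 0.
Hypothesis hNinc : forall a b, (1 <= a)%N -> (a < b)%N -> N a + 1 <= N b.
Hypothesis hMinc : forall a b, (1 <= a)%N -> (a < b)%N -> M a + 1 <= M b.
Hypothesis hM0 : forall {a}, (1 <= a)%N -> 0 <= M a.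
Hypothesis hp : forall {T}, (T0 <= T)%N -> (1 <= p T)%N /\ (p T < T)%N.
Hypothesis hNr : forall T, (T0 <= T)%N -> N T.+1 = 2 * N T - N (p T).
Hypothesis hMr : forall T, (T0 <= T)%N -> M T.+1 = 2 * M T - M (p T).

Lemma N0 {a} : (1 <= a)%N -> 0 <= N a.
Proof.
move=> a1; case: (ltngtP 1 a) => [h||<-]; last 2 first.
- by move=> h; lia.
- by rewrite hN1.
by have := hNinc _ _ (leqnn 1) h; rewrite hN1; lra.
Qed.

Definition ch T x := (M T - M x) / (N T - N x).

Fixpoint bnd m : R * R :=
  if m is m'.+1 then
    let T := (T0 + m')%N in
    let lam := N T / N T.+1 in
    let c := ch T (p T) in
    (c - lam * (c - (bnd m').1), c + lam * ((bnd m').2 - c))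
  else (1 / N T0, M T0).

Lemma Dpos {T x} : (1 <= x)%N -> (x < T)%N -> 0 < N T - N x.
Proof. move=> h1 h2; have := hNinc _ _ h1 h2; lra. Qed.

Lemma inv m x : (1 <= x)%N -> (x < T0 + m)%N ->
  (bnd m).1 <= ch (T0 + m) x <= (bnd m).2.
Proof.
elim: m x => [|m IH] x x1 xT.
  rewrite addn0 in xT *; rewrite /= /ch.
  have D0 := Dpos x1 xT.
  have Dl : N T0 - N x <= N T0 by have := N0 x1; lra.
  have MD : 1 <= M T0 - M x by have := hMinc _ _ x1 xT; lra.
  have MT0 := hM0 (ltnW (leq_trans (isT : (1 < 2)%N) hT0)).
  have Mx := hM0 x1.
  have ND : 1 <= N T0 - N x by have := hNinc _ _ x1 xT; lra.
  have NT0 : 0 < N T0 by lra.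
  apply/andP; split.
    rewrite div1r ler_pdivlMr // mulrC ler_pdivrMr //.
    nra.
  rewrite ler_pdivrMr //; nra.
rewrite addnS in xT *.
set T := (T0 + m)%N.
have TT0 : (T0 <= T)%N by rewrite /T leq_addr.
have [p1 pT] := hp TT0.
have hc := IH _ p1 pT.
set c := ch T (p T) in hc *.
set lo := (bnd m).1 in hc *; set hi := (bnd m).2 in hc *.
have NT : 0 < N T by have := hNinc _ _ (isT : (1 <= 1)%N) (leq_trans (isT : (1 < 2)%N) (leq_trans hT0 TT0)); rewrite hN1; lra.
have D2 := Dpos p1 pT.
have NT1 : N T.+1 = N T + (N T - N (p T)) by rewrite hNr //; ring.
have NT1p : 0 < N T.+1 by lra.
set lam := N T / N T.+1.
have lam0 : 0 <= lam by rewrite /lam divr_ge0 // ltW.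
have lamN : lam * N T.+1 = N T by rewrite /lam mulfVK // gt_eqF.
have /andP[clo chi] := hc.
rewrite /=  -/T -/lam -/c -/lo -/hi.
case: (ltngtP x T) => [xlt||xe]; last 2 first.
- by move=> h; move: xT; rewrite /T in h; lia.
- subst x.
  have -> : ch T.+1 T = c.
    rewrite /ch /c; congr (_ / _).
      by rewrite hMr //; ring.
    by rewrite NT1; ring.
  apply/andP; split; nra.
have /andP[h1lo h1hi] := IH _ x1 xlt.
set c1 := ch T x in h1lo h1hi.
have D1 := Dpos x1 xlt.
have Nx := N0 x1.
set S := N T.+1 - N x.
have S0 : 0 < S by rewrite /S; lra.
have key : ch T.+1 x * S = (N T - N x) * c1 + (N T - N (p T)) * c.
  rewrite /ch /c1 /c /S mulfVK; last by rewrite gt_eqF // /S; lra.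
  rewrite mulrC mulfVK; last by rewrite gt_eqF.
  rewrite mulrC mulfVK; last by rewrite gt_eqF.
  by rewrite hMr //; ring.
have DS : N T - N x <= lam * S.
  have : (N T - N x) * N T.+1 <= N T * S by rewrite /S NT1; nra.
  by rewrite -lamN; nra.
apply/andP; split.
  rewrite -(ler_pM2r S0) key.
  have : 0 <= (N T - N x) * (c1 - lo) by nra.
  have : 0 <= (c - lo) * (lam * S - (N T - N x)) by nra.
  rewrite /S NT1 in S0 *. nra.
rewrite -(ler_pM2r S0) key.
have : 0 <= (N T - N x) * (hi - c1) by nra.
have : 0 <= (hi - c) * (lam * S - (N T - N x)) by nra.
rewrite /S NT1 in S0 *. nra.
Qed.


Lemma NTpos T : (2 <= T)%N -> 0 < N T.
Proof. move=> h; have := hNinc _ _ (isT : (1 <= 1)%N) h; rewrite hN1; lra. Qed.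

Lemma step_facts m : let T := (T0 + m)%N in
  [/\ 0 <= N T / N T.+1, N T / N T.+1 <= 1, N T / N T.+1 * N T.+1 = N T,
      (bnd m).1 <= ch T (p T) & ch T (p T) <= (bnd m).2].
Proof.
move=> T.
have TT0 : (T0 <= T)%N by rewrite /T leq_addr.
have [p1 pT] := hp TT0.
have /andP[h1 h2] := @inv m (p T) p1 pT.
have NT : 0 < N T by apply: NTpos; lia.
have D2 := Dpos p1 pT.
have NT1 : N T.+1 = N T + (N T - N (p T)) by rewrite hNr //; ring.
have NT1p : 0 < N T.+1 by lra.
split => //.
- by rewrite divr_ge0 // ltW.
- by rewrite ler_pdivrMr // mul1r; lra.
- by rewrite mulfVK // gt_eqF.
Qed.

Lemma lo_le_hi m : (bnd m).1 <= (bnd m).2.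
Proof.
have /andP[h1 h2] := @inv m 1 isT (leq_trans hT0 (leq_addr _ _)).
exact: le_trans h2.
Qed.

Lemma lo_mono m : (bnd m).1 <= (bnd m.+1).1.
Proof.
have [l0 l1 _ h1 h2] := step_facts m.
rewrite [X in _ <= X]/=.
set lam := N _ / _ in l0 l1 *; set c := ch _ _ in h1 h2 *.
have : 0 <= (1 - lam) * (c - (bnd m).1) by rewrite mulr_ge0 // subr_ge0.
lra.
Qed.

Lemma hi_mono m : (bnd m.+1).2 <= (bnd m).2.
Proof.
have [l0 l1 _ h1 h2] := step_facts m.
rewrite [X in X <= _]/=.
set lam := N _ / _ in l0 l1 *; set c := ch _ _ in h1 h2 *.
have : 0 <= (1 - lam) * ((bnd m).2 - c) by rewrite mulr_ge0 // subr_ge0.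
lra.
Qed.

Lemma width m : ((bnd m).2 - (bnd m).1) * N (T0 + m) = (M T0 - 1 / N T0) * N T0.
Proof.
elim: m => [|m IH]; first by rewrite addn0.
have [l0 l1 lN h1 h2] := step_facts m.
rewrite addnS -IH /=.
set lam := N _ / _ in l0 l1 lN *; set c := ch _ _ in h1 h2 *.
rewrite -lN; ring.
Qed.


Lemma Ngrow T : (1 <= T)%N -> (T.-1)%:R <= N T.
Proof.
elim: T => // T IH _; case: T IH => [_|T IH]; first by rewrite hN1.
have := IH isT; have := hNinc _ _ (isT : (1 <= T.+1)%N) (ltnSn T.+1).
rewrite /= -[T.+1]addn1 natrD; lra.
Qed.

Lemma hi_anti k m : (k <= m)%N -> (bnd m).2 <= (bnd k).2.
Proof.
move=> /subnK <-; elim: (m - k)%N => [|j IH] //=.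
exact: le_trans (hi_mono _) IH.
Qed.

Lemma lo_mon k m : (k <= m)%N -> (bnd k).1 <= (bnd m).1.
Proof.
move=> /subnK <-; elim: (m - k)%N => [|j IH] //=.
exact: le_trans IH (lo_mono _).
Qed.

Lemma lo_hi k m : (bnd k).1 <= (bnd m).2.
Proof.
apply: (le_trans (@lo_mon _ _ (leq_maxl k m))).
apply: (le_trans (lo_le_hi _)).
exact: (@hi_anti _ _ (leq_maxr k m)).
Qed.

Lemma main_cvg : exists L : R, 0 < L /\ (fun T => M T / N T) @ \oo --> L.
Proof.
pose lo k := (bnd k).1.
have nd : {homo lo : n m / (n <= m)%N >-> n <= m} by move=> a b; exact: lo_mon.
have ub : has_ubound (range lo) by exists (bnd 0).2 => _ [k _ <-]; exact: lo_hi.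
have ne : range lo !=set0 by exists (lo 0); exists 0%N.
set L := sup (range lo).
have cvl := nondecreasing_cvgn nd ub.
have loL k : lo k <= L by apply: (sup_upper_bound (conj ne ub)); exists k.
have Lhi k : L <= (bnd k).2 by apply: ge_sup => // _ [j _ <-]; exact: lo_hi.
have NT0 : 0 < N T0 by exact: NTpos.
exists L; split.
  apply: lt_le_trans (loL 0%N); rewrite /lo /= divr_gt0 //.
apply/cvgrPdist_le => e e0.
set K := (M T0 - 1 / N T0) * N T0 + M 1.
have K0 : 0 <= K.
  have := lo_le_hi 0; rewrite /= => h.
  have := hM0 (isT : (1 <= 1)%N).
  have : 0 <= (M T0 - 1 / N T0) * N T0 by rewrite mulr_ge0 // ?subr_ge0 // ltW.
  rewrite /K; lra.
have Ke : 0 <= K / e by rewrite divr_ge0 // ltW.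
exists (T0 + Num.bound (K / e)).+1 => // T /= hT.
have -> : T = (T0 + (T - T0))%N by lia.
set m := (T - T0)%N.
set TT := (T0 + m)%N.
have T1 : (1 < TT)%N by rewrite /TT; lia.
have NTT : 0 < N TT by apply: NTpos.
have /andP[c1 c2] := @inv m 1 isT T1.
have W := width m.
have chE : M TT / N TT = ch TT 1 + M 1 / N TT.
  by rewrite /ch hN1 subr0 mulrBl subrK.
have Kb : K / N TT <= e.
  rewrite ler_pdivrMr // mulrC -ler_pdivrMr //.
  have hb := archi_boundP Ke. have hb2 := @Ngrow TT (ltnW T1).
  apply: (le_trans (ltW hb)); apply: le_trans hb2.
  rewrite ler_nat /TT; lia.
have wE : (bnd m).2 - (bnd m).1 + M 1 / N TT = K / N TT.
  by rewrite /K -W mulrDl mulfK // gt_eqF.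
have r0 : 0 <= M 1 / N TT by rewrite divr_ge0 ?(ltW NTT) // (hM0 (isT : (1 <= 1)%N)).
have := loL m; have := Lhi m; rewrite /lo => h1 h2.
rewrite chE ler_norml; apply/andP; split; lra.
Qed.

End Core.

Lemma esup_close_le (R : realType) (u v : nat -> R) :
  (forall e, 0 < e -> exists K, forall i, (K <= i)%N -> `|u i - v i| <= e) ->
  (limn_esup (fun i => (u i)%:E) <= limn_esup (fun i => (v i)%:E))%E.
Proof.
move=> H; rewrite (limn_esup_lim (fun i => (u i)%:E)) (limn_esup_lim (fun i => (v i)%:E)).
apply/lee_addgt0Pr => e e0.
have [K HK] := H e e0.
have cv := @is_cvg_esups R (fun i => (v i)%:E).
have -> : (limn (esups (fun i => (v i)%:E)) + e%:E =
    limn (fun n => esups (fun i => (v i)%:E) n + e%:E))%E.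
  rewrite (@limeD _ _ _ _ (esups (fun i => (v i)%:E)) (cst e%:E)) //.
  - by rewrite lim_cst.
  - exact: is_cvg_cst.
  - by apply: fin_num_adde_defl; rewrite lim_cst.
apply: lee_lim.
- exact: is_cvg_esups.
- apply: is_cvgeD => //; last exact: is_cvg_cst.
  by apply: fin_num_adde_defl; rewrite lim_cst.
exists K => // n /= Kn.
apply: ge_ereal_sup => _ [k /= nk <-].
have hk : u k <= v k + e.
  have := HK k (leq_trans Kn nk); rewrite ler_norml => /andP[_ h]; lra.
apply: (le_trans (y := ((v k)%:E + e%:E)%E)); first by rewrite -EFinD lee_fin.
rewrite leeD2r //; apply: ereal_sup_ubound; exists k => //.
Qed.

Lemma esup_close (R : realType) (u v : nat -> R) :
  (forall e, 0 < e -> exists K, forall i, (K <= i)%N -> `|u i - v i| <= e) ->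
  limn_esup (fun i => (u i)%:E) = limn_esup (fun i => (v i)%:E).
Proof.
move=> H; apply/eqP; rewrite eq_le; apply/andP; split; apply: esup_close_le => //.
by move=> e e0; have [K HK] := H e e0; exists K => i Ki; rewrite distrC; exact: HK.
Qed.

Lemma ratio_close (R : realType) (N M : nat -> R) (L : R) :
  0 < L -> (fun i => M i / N i) @ \oo --> L ->
  (forall i, (2 <= i)%N -> 1 <= N i) ->
  (forall i, (2 <= i)%N -> N i.+1 <= 3 * N i) ->
  (forall i, (2 <= i)%N -> 0 < M i) ->
  forall e, 0 < e -> exists K, forall i, (K <= i)%N ->
    `|N i.+1 / N i - M i.+1 / M i| <= e.
Proof.
move=> L0 ha hN1 hN3 hM e e0.
set eta := Num.min (L / 2) (e * L / 12).
have eta0 : 0 < eta by rewrite lt_min !divr_gt0 // mulr_gt0.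
have etaL : eta <= L / 2 by rewrite ge_min lexx.
have etae : eta <= e * L / 12 by rewrite ge_min lexx orbT.
have [K1 _ HK1] := (cvgrPdist_le _ _).1 ha eta eta0.
exists (maxn K1 2) => i hi.
have i2 : (2 <= i)%N by lia.
have h1 : `|L - M i / N i| <= eta by apply: HK1 => /=; lia.
have h2 : `|L - M i.+1 / N i.+1| <= eta by apply: HK1 => /=; lia.
set ai := M i / N i in h1; set ai1 := M i.+1 / N i.+1 in h2.
have Ni := hN1 _ i2; have Ni1 := hN1 _ (leqW i2).
have Mi := hM _ i2; have Mi1 := hM _ (leqW i2).
have N3 := hN3 _ i2.
have ai0 : L / 2 <= ai.
  move: h1; rewrite ler_norml => /andP[_ h]; lra.
have aip : 0 < ai.
  have : 0 < L / 2 by rewrite divr_gt0.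
  lra.
have E : N i.+1 / N i - M i.+1 / M i = (N i.+1 / N i) * (ai - ai1) / ai.
  rewrite /ai /ai1; field.
  apply/and3P; split; apply/negP => /eqP h; lra.
set u := N i.+1 / N i.
have u0 : 0 <= u by rewrite /u divr_ge0 //; lra.
have u3 : u <= 3 by rewrite /u ler_pdivrMr; lra.
have w2 : `|ai - ai1| <= 2 * eta.
  move: h1 h2; rewrite !ler_norml => /andP[h1 h1'] /andP[h2 h2']; lra.
rewrite E normrM normrM normfV (ger0_norm u0) (gtr0_norm aip).
rewrite ler_pdivrMr //.
have : u * `|ai - ai1| <= 3 * (2 * eta).
  apply: ler_pM => //; exact: normr_ge0.
have : e * (L / 2) <= e * ai by rewrite ler_pM2l.
lra.
Qed.

Lemma chain (f : nat -> int) i :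
  (forall j, (1 <= j)%N -> (j < i)%N -> f j + 1 <= f j.+1) ->
  forall a b, (1 <= a)%N -> (a <= b)%N -> (b <= i)%N -> f a + (b - a)%:Z <= f b.
Proof.
move=> H a b a1; elim: b => [|b IHb] ab bi; first by lia.
case: (ltngtP a b.+1) => [h||<-]; last 2 first.
- by lia.
- by rewrite subnn addr0.
have := IHb (h : (a <= b)%N) (ltnW bi).
have := H b (leq_trans a1 h) bi.
lia.
Qed.

Lemma n_inc (A : Type) (psi : nat -> nat + A) : is_function psi ->
  forall i j, (1 <= j)%N -> (j < i)%N ->
  assoc_seq psi j + 1 <= assoc_seq psi j.+1.
Proof.
move=> hf; elim => [|i IH] j j1 ji; first by [].
case: (ltngtP j i) => [h|h|e]; [by apply: IH| by lia|subst i].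
have ch := @chain (assoc_seq psi) j IH.
case: (hf j j1) => [[a ha]|[k [hk [k1 kj]]]].
  rewrite (n_rec_r _ _ _ _ j1 ha).
  have := ch 1%N j isT j1 (leqnn j); rewrite n_1; lia.
have kj' : (k <= j)%N by lia.
rewrite (n_rec_l _ _ _ _ j1 hk (introT andP (conj k1 kj'))).
have := ch k j k1 kj' (leqnn j); lia.
Qed.

Theorem proposition6p2 (R : realType) (A : Type) (psi : nat -> nat + A)
  (n' : nat -> int) :
  reduced psi ->
  (delta R psi < (2%:R : R)%:E)%E ->
  (forall i, (1 <= i)%N -> 0 <= n' i) ->
  (forall i, (1 <= i)%N -> n' i < n' i.+1) ->
  (exists N, forall i, (N <= i)%N ->
      exists k, psi i = inl k /\ n' i.+1 = 2 * n' i - n' k) ->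
  (exists l : R, 0 < l /\
     (fun i : nat => ((n' i)%:~R / (assoc_seq psi i)%:~R : R)) @ \oo --> l) /\
  delta R psi = limsup_ratio R n'.
Proof.
move=> [hf _] _ hn'0 hn'inc [Nn hN].
set n := assoc_seq psi.
have ninc := @n_inc _ psi hf.
have n1 : n 1%N = 0 := n_1 _ psi.
have nch a b : (1 <= a)%N -> (a <= b)%N -> n a + (b - a)%:Z <= n b.
  move=> a1 ab; exact: (@chain (assoc_seq psi) b.+1 (ninc b.+1) a b a1 ab (leqnSn b)).
have nlt a b : (1 <= a)%N -> (a < b)%N -> n a + 1 <= n b.
  move=> a1 ab; have := nch a b a1 (ltnW ab); lia.
have n'ch a b : (1 <= a)%N -> (a <= b)%N -> n' a + (b - a)%:Z <= n' b.
  move=> a1 ab; apply: (@chain n' b) => // j j1 _.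
  have := hn'inc j j1; lia.
have n'lt a b : (1 <= a)%N -> (a < b)%N -> n' a + 1 <= n' b.
  move=> a1 ab; have := n'ch a b a1 (ltnW ab); lia.
pose N i : R := (n i)%:~R.
pose M i : R := (n' i)%:~R.
pose p T := match psi T with inl k => k | inr _ => 1%N end.
pose T0 := maxn Nn 2.
have cast1 (x y : int) : x + 1 <= y -> (x%:~R : R) + 1 <= y%:~R.
  by move=> h; rewrite -[1]/((1%:~R : R)) -intrD ler_int.
have hp T : (T0 <= T)%N -> (1 <= p T)%N /\ (p T < T)%N.
  move=> hT; have [k [hk _]] := hN T (leq_trans (leq_maxl _ _) hT).
  have T1 : (1 <= T)%N by move: hT; rewrite /T0; lia.
  rewrite /p hk; case: (hf T T1) => [[a]|[k' [hk' [k1 kT]]]]; first by rewrite hk.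
  move: hk'; rewrite hk => -[->]; split => //; lia.
have hrec T : (T0 <= T)%N -> exists k, psi T = inl k /\ p T = k /\
    n' T.+1 = 2 * n' T - n' k /\ (1 <= k <= T)%N.
  move=> hT; have [k [hk e]] := hN T (leq_trans (leq_maxl _ _) hT).
  have [p1 pT] := hp T hT.
  exists k; rewrite /p hk in p1 pT *; split => //; split => //; split => //.
  by rewrite p1 ltnW.
have [L [L0 HL]] : exists L : R, 0 < L /\ (fun T => M T / N T) @ \oo --> L.
  apply: (@main_cvg R N M p T0).
  - by rewrite /T0 leq_maxr.
  - by rewrite /N n1.
  - by move=> a b a1 ab; apply: cast1; apply: nlt.
  - by move=> a b a1 ab; apply: cast1; apply: n'lt.
  - by move=> a a1; rewrite /M ler0z; apply: hn'0.
  - exact: hp.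
  - move=> T hT; have [k [hk [pk [_ kb]]]] := hrec T hT.
    have T1 : (1 <= T)%N by move: hT; rewrite /T0; lia.
    by rewrite /N pk /n (n_rec_l _ _ _ _ T1 hk kb) intrB intrM.
  - move=> T hT; have [k [hk [pk [e kb]]]] := hrec T hT.
    by rewrite /M pk e intrB intrM.
split; first by exists L.
rewrite /delta /limsup_ratio.
apply: esup_close.
apply: (@ratio_close R N M L L0 HL).
- move=> i i2; have := cast1 _ _ (nlt 1%N i isT i2).
  by rewrite /N n1 add0r.
- move=> i i2; rewrite /N.
  have h1 := nlt 1%N i isT i2; rewrite n1 in h1.
  have h2 : n i.+1 <= 2 * n i + 1.
    have i1 : (1 <= i)%N by lia.
    case: (hf i i1) => [[a ha]|[k [hk [k1 ki]]]].
      by rewrite /n (n_rec_r _ _ _ _ i1 ha).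
    have ki' : (1 <= k <= i)%N by lia.
    rewrite /n (n_rec_l _ _ _ _ i1 hk ki').
    have := nch 1%N k isT k1; rewrite n1 /n; lia.
  have h3 : n i.+1 <= 3 * n i by lia.
  by have := h3; rewrite -(ler_int R) intrM.
- move=> i i2; rewrite /M ltr0z.
  have := n'lt 1%N i isT i2; have := hn'0 1%N isT; lia.
Qed.
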